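(* For all integers $b,k\ge0$ and $i\in\{1,2,\dots,b-1\}$, $$\sum_{a=0}^{k}\frac{[a+i-1]!\,[b-i+a-1]!}{[a]!\,[a+b]!}=\frac{1}{[i]\,[b-i]}\cdot\frac{[i+k]!\,[b+k-i]!}{[k]!\,[b+k]!},$$ as an identity of rational functions of $q$.
   Context: For an indeterminate (or complex number) $q$ and $m\in\mathbb{Z}$, $[m]=\frac{q^m-q^{-m}}{q-q^{-1}}$ is the quantum integer and $[m]!=[1][2]\cdots[m]$, $[0]!=1$. *)

(* Defs.v *)
From mathcomp Require Import all_boot all_order all_algebra.
Set Implicit Arguments. Unset Strict Implicit. Unset Printing Implicit Defensive.
Import Order.TTheory GRing.Theory Num.Theory.
Local Open Scope ring_scope.

Definition RatFun : fieldType := {fraction {poly rat}}.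

Definition qvar : RatFun := tofrac ('X : {poly rat}).

Definition qint (F : fieldType) (q : F) (m : int) : F :=
  (q ^ m - q ^ (- m)) / (q - q^-1).

Definition qfact (F : fieldType) (q : F) (n : nat) : F :=
  \prod_(1 <= j < n.+1) qint q j%:Z.

(* Main.v *)
Require Import Defs.
From mathcomp Require Import all_boot all_order all_algebra.
From mathcomp Require Import ring zify.
Import Order.TTheory GRing.Theory Num.Theory.
Local Open Scope ring_scope.

Section Gen.
Variable F : fieldType.
Variable q : F.
Hypothesis hq0 : q != 0.
Hypothesis hq : forall n, (0 < n)%N -> q ^+ n != 1.

Lemma qintE (n : nat) : qint q n%:Z = (q ^+ n - (q ^+ n)^-1) / (q - q^-1).
Proof. by rewrite /qint -invr_expz. Qed.

Lemma qd0 : q - q^-1 != 0.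
Proof.
apply/negP; rewrite subr_eq0 => /eqP h.
have : q ^+ 2 == 1.
  by rewrite expr2 {2}h mulfV.
by rewrite (negbTE (hq _ _)).
Qed.

Lemma qint_neq0 (n : nat) : (0 < n)%N -> qint q n%:Z != 0.
Proof.
move=> n0; rewrite qintE mulf_neq0 ?invr_eq0 ?qd0 //.
have hn : q ^+ n != 0 by rewrite expf_neq0.
apply/negP; rewrite subr_eq0 => /eqP h.
have : q ^+ (n + n) == 1.
  by rewrite exprD {2}h mulfV.
by rewrite (negbTE (hq _ _)) // addn_gt0 n0.
Qed.

Lemma qfactS n : qfact q n.+1 = qfact q n * qint q n.+1%:Z.
Proof. by rewrite /qfact big_nat_recr. Qed.

Lemma qfact_neq0 n : qfact q n != 0.
Proof.
elim: n => [|n IH]; first by rewrite /qfact big_geq ?oner_eq0.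
by rewrite qfactS mulf_neq0 // qint_neq0.
Qed.

Lemma key (i j k : nat) :
  qint q (i + k).+1%:Z * qint q (j + k).+1%:Z
  = qint q k.+1%:Z * qint q (i + j + k).+1%:Z + qint q i%:Z * qint q j%:Z.
Proof.
rewrite !qintE.
have -> : ((i + j + k).+1 = i + j + k.+1)%N by rewrite addnS.
have -> : ((i + k).+1 = i + k.+1)%N by rewrite addnS.
have -> : ((j + k).+1 = j + k.+1)%N by rewrite addnS.
rewrite !exprD.
have hx : q ^+ i != 0 by rewrite expf_neq0.
have hy : q ^+ j != 0 by rewrite expf_neq0.
have hz : q ^+ k.+1 != 0 by rewrite expf_neq0.
move: (q ^+ i) (q ^+ j) (q ^+ k.+1) hx hy hz => x y z hx hy hz.
have hd := qd0.
have h2 : q * q - 1 != 0 by rewrite subr_eq0 -expr2 hq.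
field.
by rewrite hq0 h2 hx hy hz.
Qed.

Lemma gen (i j k : nat) :
  \sum_(0 <= a < k.+1)
     (qfact q (a + i) * qfact q (j + a))
     / (qfact q a * qfact q (a + i + j).+2)
  = (qint q i.+1%:Z * qint q j.+1%:Z)^-1
    * ((qfact q (i + k).+1 * qfact q (j + k).+1)
       / (qfact q k * qfact q (i + j + k).+2)).
Proof.
elim: k => [|k IH].
  rewrite big_nat1 !addn0 !add0n [qfact q i.+1]qfactS [qfact q j.+1]qfactS [qfact q (i + j).+2]qfactS.
  have := @qint_neq0 i.+1 (ltn0Sn i); have := @qint_neq0 j.+1 (ltn0Sn j).
  have := qfact_neq0 i; have := qfact_neq0 j; have := qfact_neq0 (i + j).+1.
  have h0 : qfact q 0 = 1 by rewrite /qfact big_geq.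
  rewrite h0.
  move: (qfact q i) (qfact q j) (qfact q (i+j).+1) (qint q i.+1) (qint q j.+1).
  move=> A B C D E hC hB hA hE hD; field.
  by rewrite hC hE hD qint_neq0.
rewrite big_nat_recr //= IH.
have -> : ((k.+1 + i + j).+2 = (i + j + k).+3)%N by rewrite !addSn -addnA [(k + _)%N]addnC.
have -> : (k.+1 + i = (i + k).+1)%N by rewrite addSn addnC.
have -> : (j + k.+1 = (j + k).+1)%N by rewrite addnS.
have -> : (i + k.+1 = (i + k).+1)%N by rewrite addnS.
have -> : ((i + j + k.+1).+2 = (i + j + k).+3)%N by rewrite addnS.
rewrite [qfact q (i + k).+2]qfactS [qfact q (j + k).+2]qfactS [qfact q k.+1]qfactS.
rewrite [qfact q (i + j + k).+3]qfactS.
have K := key i.+1 j.+1 k.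
have e1 : ((i.+1 + k).+1 = (i + k).+2)%N by rewrite addSn.
have e2 : ((j.+1 + k).+1 = (j + k).+2)%N by rewrite addSn.
have e3 : ((i.+1 + j.+1 + k).+1 = (i + j + k).+3)%N by rewrite addSn addnS addSn.
rewrite e1 e2 e3 in K.
have := @qint_neq0 i.+1 (ltn0Sn i); have := @qint_neq0 j.+1 (ltn0Sn j).
have := @qint_neq0 k.+1 (ltn0Sn k); have := @qint_neq0 (i+j+k).+3 (ltn0Sn _).
have := @qint_neq0 (j+k).+2 (ltn0Sn _).
have := qfact_neq0 k; have := qfact_neq0 (i + j + k).+2.
move: K.
move: (qint q (i + k).+2) (qint q (j + k).+2) (qint q k.+1) (qint q (i + j + k).+3).
move: (qint q i.+1) (qint q j.+1) (qfact q (i + k).+1) (qfact q (j + k).+1).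
move: (qfact q k) (qfact q (i + j + k).+2).
move=> X W E G U V A B C D K hW hX hB hD hC hG hE.
have -> : A = (C * D + E * G) / B by rewrite -K; field.
field.
by rewrite hX hW hB hD hC hG hE.
Qed.


End Gen.

Lemma qvar_neq0 : qvar != 0.
Proof. by rewrite /qvar tofrac_eq0 polyX_eq0. Qed.

Lemma qvar_pow n : (0 < n)%N -> qvar ^+ n != 1.
Proof.
move=> n0; rewrite /qvar -tofracXn -tofrac1 tofrac_eq.
apply/negP => /eqP h.
have := congr1 (fun p : {poly rat} => size p) h; rewrite /=; rewrite size_polyXn size_poly1.
by case: n n0 h.
Qed.

Theorem lemmaA7 (b k i : nat) (hi1 : (1 <= i)%N) (hib : (i <= b - 1)%N) :
  \sum_(0 <= a < k.+1)
     (qfact qvar (a + i - 1) * qfact qvar (b - i + a - 1))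
     / (qfact qvar a * qfact qvar (a + b))
  = (qint qvar i%:Z * qint qvar (b - i)%:Z)^-1
    * ((qfact qvar (i + k) * qfact qvar (b + k - i))
       / (qfact qvar k * qfact qvar (b + k))).
Proof.
case: i hi1 hib => [//|i] _ hib.
have [j hj] : exists j, b = (i + j).+2.
  exists (b - i.+2)%N; lia.
subst b.
have E1 a : (a + i.+1 - 1 = a + i)%N by lia.
have E2 a : ((i + j).+2 - i.+1 + a - 1 = j + a)%N by lia.
have E3 a : (a + (i + j).+2 = (a + i + j).+2)%N by lia.
under eq_bigr do rewrite E1 E2 E3.
have -> : ((i + j).+2 - i.+1 = j.+1)%N by lia.
have -> : (i.+1 + k = (i + k).+1)%N by lia.
have -> : ((i + j).+2 + k - i.+1 = (j + k).+1)%N by lia.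
have -> : ((i + j).+2 + k = (i + j + k).+2)%N by lia.
exact: (@gen _ qvar qvar_neq0 qvar_pow i j k).
Qed.
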